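(* Let $t_1,\dots,t_n,s_1,\dots,s_n>0$. Then $(K^n,|\cdot|_{t_1}\times\cdots\times|\cdot|_{t_n})$ and $(K^n,|\cdot|_{s_1}\times\cdots\times|\cdot|_{s_n})$ are isometrically isomorphic if and only if, after a suitable permutation of $s_1,\dots,s_n$, one has $t_i/s_i\in V_K$ for each $i=1,\dots,n$.
   Context: $K$ is a complete non-archimedean non-trivially valued field which is not spherically complete, with valuation group $V_K=\{|x|:x\in K\setminus\{0\}\}$. $(K^n,|\cdot|_{t_1}\times\cdots\times|\cdot|_{t_n})$ denotes $K^n$ with norm $\|(x_1,\dots,x_n)\|=\max_it_i|x_i|$. *)

(* Defs.v *)
From HB Require Import structures.
From mathcomp Require Import all_boot all_order all_algebra all_fingroup.
From mathcomp Require Import reals.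
Set Implicit Arguments. Unset Strict Implicit. Unset Printing Implicit Defensive.
Import Order.TTheory GRing.Theory Num.Theory.
Local Open Scope ring_scope.

Definition nonarch_abs (R : realType) (K : fieldType) (abs : K -> R) : Prop :=
  [/\ forall x : K, 0 <= abs x,
      forall x : K, abs x = 0 <-> x = 0,
      forall x y : K, abs (x * y) = abs x * abs y &
      forall x y : K, abs (x + y) <= Num.max (abs x) (abs y)].

Definition nontrivial_abs (R : realType) (K : fieldType) (abs : K -> R) : Prop :=
  exists x : K, abs x != 0 /\ abs x != 1.

Definition abs_cauchy (R : realType) (K : fieldType) (abs : K -> R)
  (u : nat -> K) : Prop :=
  forall e : R, 0 < e -> exists N : nat, forall m k : nat,
    (N <= m)%N -> (N <= k)%N -> abs (u m - u k) < e.

Definition abs_converges (R : realType) (K : fieldType) (abs : K -> R)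
  (u : nat -> K) : Prop :=
  exists l : K, forall e : R, 0 < e -> exists N : nat, forall m : nat,
    (N <= m)%N -> abs (u m - l) < e.

Definition abs_complete (R : realType) (K : fieldType) (abs : K -> R) : Prop :=
  forall u : nat -> K, abs_cauchy abs u -> abs_converges abs u.

Definition cball (R : realType) (K : fieldType) (abs : K -> R) (c : K) (r : R)
  : pred K := fun x => abs (x - c) <= r.

Definition spherically_complete (R : realType) (K : fieldType) (abs : K -> R)
  : Prop :=
  forall (c : nat -> K) (r : nat -> R),
    (forall k, 0 < r k) ->
    (forall k x, cball abs (c k.+1) (r k.+1) x -> cball abs (c k) (r k) x) ->
    exists x : K, forall k, cball abs (c k) (r k) x.

Definition value_group (R : realType) (K : fieldType) (abs : K -> R) (v : R)
  : Prop := exists x : K, x != 0 /\ abs x = v.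

(* the norm of (K^n, |.|_{t_1} x ... x |.|_{t_n}) : max_i t_i |x_i| *)
Definition wnorm (R : realType) (K : fieldType) (abs : K -> R) (n : nat)
  (t : 'I_n -> R) (x : 'rV[K]_n) : R :=
  \big[Num.max/0]_(i < n) (t i * abs (x ord0 i)).

Definition isometrically_isomorphic (R : realType) (K : fieldType)
  (abs : K -> R) (n : nat) (t s : 'I_n -> R) : Prop :=
  exists f : 'rV[K]_n -> 'rV[K]_n,
    [/\ forall (a : K) (x y : 'rV[K]_n), f (a *: x + y) = a *: f x + f y,
        bijective f &
        forall x, wnorm abs s (f x) = wnorm abs t x].

(* Main.v *)
Require Import Defs.
From HB Require Import structures.
From mathcomp Require Import all_boot all_order all_algebra all_fingroup.
From mathcomp Require Import reals boolp ring.
From Stdlib Require Import ClassicalEpsilon FunctionalExtensionality PropExtensionality.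
Import Order.TTheory GRing.Theory Num.Theory.
Local Open Scope ring_scope.
Set Implicit Arguments. Unset Strict Implicit.

Lemma cnt (T : eqType) n (F : 'I_n -> T) x :
  count_mem x [tuple F i | i < n] = #|[set i | F i == x]|.
Proof.
rewrite cardsE cardE /enum_mem size_filter /= count_map -enumT.
by apply: eq_count.
Qed.

Section Basic.
Variables (R : realType) (K : fieldType) (abs : K -> R).
Hypothesis Habs : nonarch_abs abs.

Lemma abs_ge0 x : 0 <= abs x. Proof. by case: Habs. Qed.
Lemma abs_eq0 x : abs x = 0 <-> x = 0. Proof. by case: Habs. Qed.
Lemma absM x y : abs (x * y) = abs x * abs y. Proof. by case: Habs. Qed.
Lemma absD x y : abs (x + y) <= Num.max (abs x) (abs y). Proof. by case: Habs. Qed.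
Lemma abs0 : abs 0 = 0. Proof. by apply/abs_eq0. Qed.
Lemma abs_neq0 x : x != 0 -> abs x != 0.
Proof. by move=> hx; apply/eqP => /abs_eq0 /eqP; rewrite (negPf hx). Qed.
Lemma abs1 : abs 1 = 1.
Proof.
have h : abs 1 != 0 by apply: abs_neq0; exact: oner_neq0.
have := absM 1 1; rewrite mulr1 => e.
by apply: (mulfI h); rewrite -e mulr1.
Qed.
Lemma absV x : x != 0 -> abs x^-1 = (abs x)^-1.
Proof.
move=> hx; have h := abs_neq0 hx.
apply: (mulfI h); rewrite -absM divff // abs1 divff //.
Qed.
Lemma absN x : abs (- x) = abs x.
Proof.
have h1 : abs (-1) = 1.
  have h : abs (-1) ^+ 2 = 1 by rewrite expr2 -absM mulrNN mulr1 abs1.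
  have := abs_ge0 (-1); move/eqP: h; rewrite sqrf_eq1 => /orP [/eqP -> //|/eqP ->].
  by rewrite ler0N1.
by rewrite -mulN1r absM h1 mul1r.
Qed.
Lemma absB x y : abs (x - y) <= Num.max (abs x) (abs y).
Proof. by rewrite -(absN y) absD. Qed.

Lemma sum_le (I : Type) (r : seq I) (P : pred I) (F : I -> K) (M : R) :
  0 <= M -> (forall i, P i -> abs (F i) <= M) -> abs (\sum_(i <- r | P i) F i) <= M.
Proof.
move=> M0 h; apply: (big_ind (fun x => abs x <= M)) => //; first by rewrite abs0.
by move=> x y hx hy; apply: le_trans (absD x y) _; rewrite ge_max hx hy.
Qed.
Lemma sum_lt (I : Type) (r : seq I) (P : pred I) (F : I -> K) (M : R) :
  0 < M -> (forall i, P i -> abs (F i) < M) -> abs (\sum_(i <- r | P i) F i) < M.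
Proof.
move=> M0 h; apply: (big_ind (fun x => abs x < M)) => //; first by rewrite abs0.
by move=> x y hx hy; apply: le_lt_trans (absD x y) _; rewrite gt_max hx hy.
Qed.

Lemma bigmax_ge (I : finType) (F : I -> R) k : F k <= \big[Num.max/0]_(i : I) F i.
Proof.
have : k \in index_enum I := mem_index_enum k.
elim: (index_enum I) => //= j r IH; rewrite inE big_cons /=.
case/orP => [/eqP->|/IH h]; first by rewrite le_max lexx.
by rewrite le_max h orbT.
Qed.
Lemma bigmax_le (I : finType) (F : I -> R) M : 0 <= M -> (forall i, F i <= M) ->
  \big[Num.max/0]_(i : I) F i <= M.
Proof.
move=> M0 h; apply: (big_ind (fun x => x <= M)) => // x y hx hy.
by rewrite ge_max hx hy.
Qed.
Lemma bigmax_lt (I : finType) (F : I -> R) M : 0 < M -> (forall i, F i < M) ->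
  \big[Num.max/0]_(i : I) F i < M.
Proof.
move=> M0 h; apply: (big_ind (fun x => x < M)) => // x y hx hy.
by rewrite gt_max hx hy.
Qed.
Lemma bigmax_ge0 (I : finType) (F : I -> R) : 0 <= \big[Num.max/0]_(i : I) F i.
Proof.
elim: (index_enum I) => [|j r IH]; rewrite ?big_nil ?big_cons //=.
by rewrite le_max IH orbT.
Qed.


Lemma core (I J : finType) (p : nat) : forall (P : {set I}) (A : {set J})
  (y : J -> I -> K), #|P| = p -> (#|P| < #|A|)%N ->
  (forall j i, j \in A -> i \in P -> abs (y j i) <= 1) ->
  exists b : J -> K, [/\ forall j, j \in A -> abs (b j) <= 1,
    exists2 j, j \in A & abs (b j) = 1 &
    forall i, i \in P -> abs (\sum_(j in A) b j * y j i) < 1].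
Proof.
elim: p => [|p IH] P A y cP ltPA Hy.
  have /card_gt0P [j0 j0A] : (0 < #|A|)%N by rewrite cP in ltPA.
  exists (fun j => if j == j0 then 1 else 0); split.
  - by move=> j _; case: ifP; rewrite ?abs1 ?abs0 ?ler01.
  - by exists j0; rewrite ?eqxx ?abs1.
  - by move=> i; move/eqP: cP; rewrite cards_eq0 => /eqP ->; rewrite inE.
have /card_gt0P [i0 i0P] : (0 < #|P|)%N by rewrite cP.
set P' := P :\ i0.
have cP' : #|P'| = p by move: cP; rewrite (cardsD1 i0) i0P add1n => -[].
have sP' : forall i, i \in P' -> i \in P by move=> i; rewrite inE => /andP[].
case: (pselect (exists2 j, j \in A & abs (y j i0) = 1)) => [[j0 j0A yj0]|hno].
- set A' := A :\ j0.
  have sA' : forall j, j \in A' -> j \in A by move=> j; rewrite inE => /andP[].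
  have cA : #|A| = (#|A'|).+1 by rewrite (cardsD1 j0) j0A.
  have y0 : y j0 i0 != 0 by apply/eqP => e; move: yj0; rewrite e abs0 => /eqP; rewrite eq_sym oner_eq0.
  set z := fun j i => y j i - y j i0 / y j0 i0 * y j0 i.
  have h1 : (#|P'| < #|A'|)%N by rewrite cP'; move: ltPA; rewrite cP cA.
  have h2 : forall j i, j \in A' -> i \in P' -> abs (z j i) <= 1.
    move=> j i jA iP; have jA0 := sA' j jA; have iP0 := sP' i iP.
    apply: le_trans (absB _ _) _; rewrite ge_max Hy //=.
    by rewrite !absM absV // yj0 invr1 mulr1 -[1]mulr1 ler_pM ?abs_ge0 ?Hy.
  have [b' [b'le [j1 j1A' b'j1] b'lt]] := IH P' A' z cP' h1 h2.
  set c := - \sum_(j in A') b' j * (y j i0 / y j0 i0).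
  exists (fun j => if j == j0 then c else b' j); split.
  + move=> j jA; case: ifP => [_|/negbT jj0]; last by apply: b'le; rewrite in_setD1 jj0 jA.
    rewrite /c absN; apply: sum_le => // k kA'.
    rewrite !absM absV // yj0 invr1 mulr1 -[1]mulr1 ler_pM ?abs_ge0 ?b'le //.
    by apply: Hy => //; apply: sA'.
  + exists j1; first exact: sA'.
    by move: j1A'; rewrite in_setD1 => /andP[/negPf -> _].
  + have key : forall i, \sum_(j in A) (if j == j0 then c else b' j) * y j i =
        \sum_(j in A') b' j * z j i.
      move=> i; rewrite (bigD1 j0) //= eqxx.
      rewrite (eq_bigl (fun j => j \in A')); last by move=> j; rewrite in_setD1 andbC.
      rewrite (eq_bigr (fun j => b' j * y j i)); last by move=> j; rewrite in_setD1 => /andP[/negPf ->].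
      rewrite /z /c; under [RHS]eq_bigr do rewrite mulrBr.
      rewrite big_split /= sumrN mulNr mulr_suml addrC; congr (_ - _).
      by apply: eq_bigr => k _; rewrite !mulrA.
    move=> i iP; rewrite key; case: (eqVneq i i0) => [->|ii0].
      rewrite big1 ?abs0 ?ltr01 // => j _; rewrite /z divfK // subrr mulr0 //.
    by apply: b'lt; rewrite in_setD1 ii0.
- have h1 : (#|P'| < #|A|)%N by rewrite cP'; move: ltPA; rewrite cP => /ltnW.
  have h2 : forall j i, j \in A -> i \in P' -> abs (y j i) <= 1.
    by move=> j i jA iP; apply: Hy => //; apply: sP'.
  have [b [ble bex blt]] := IH P' A y cP' h1 h2.
  exists b; split => // i iP; case: (eqVneq i i0) => [->|ii0]; last by apply: blt; rewrite in_setD1 ii0.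
  apply: sum_lt; first exact: ltr01.
  move=> j jA; rewrite absM.
  have hy : abs (y j i0) < 1.
    rewrite lt_neqAle Hy // andbT; apply/eqP => e; apply: hno; by exists j.
  apply: le_lt_trans hy; rewrite -{2}[abs (y j i0)]mul1r ler_wpM2r ?abs_ge0 //.
  exact: ble.
Qed.


Definition VS (n : nat) (s : 'I_n -> R) (r : R) : {set 'I_n} :=
  [set i | `[< value_group abs (r / s i) >]].

Lemma row_sumE (J : finType) (A : {set J}) (n : nat) (b : J -> K) (x : J -> 'rV[K]_n) i :
  (\sum_(j in A) b j *: x j) ord0 i = \sum_(j in A) b j * x j ord0 i.
Proof. by rewrite summxE; apply: eq_bigr => j _; rewrite mxE. Qed.

Lemma term_le (n : nat) (s : 'I_n -> R) (x : 'rV[K]_n) i :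
  s i * abs (x ord0 i) <= wnorm abs s x.
Proof. exact: (bigmax_ge (fun i => s i * abs (x ord0 i))). Qed.

Lemma upper (n : nat) (s : 'I_n -> R) (Hs : forall i, 0 < s i) (r : R) (hr : 0 < r)
  (J : finType) (A : {set J}) (x : J -> 'rV[K]_n) :
  (forall j, j \in A -> wnorm abs s (x j) <= r) -> (#|VS s r| < #|A|)%N ->
  exists b : J -> K, [/\ forall j, j \in A -> abs (b j) <= 1,
    exists2 j, j \in A & abs (b j) = 1 &
    wnorm abs s (\sum_(j in A) b j *: x j) < r].
Proof.
move=> Hx ltA.
have [c Hc] : exists c : 'I_n -> K, forall i, i \in VS s r -> c i != 0 /\ abs (c i) = r / s i.
  apply: (@fin_all_exists _ (fun _ => K) (fun i ci => i \in VS s r -> ci != 0 /\ abs ci = r / s i)) => i.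
  case: (pselect (i \in VS s r)) => [|h]; last by exists 0.
  by rewrite inE => /asboolP [z [z0 ez]]; exists z.
set y := fun j i => x j ord0 i / c i.
have Hy : forall j i, j \in A -> i \in VS s r -> abs (y j i) <= 1.
  move=> j i jA iP; have [c0 ec] := Hc i iP.
  rewrite /y absM absV // ec invf_div mulrA ler_pdivrMr // mul1r.
  rewrite mulrC; apply: le_trans (Hx j jA); exact: term_le.
have [b [ble bex blt]] := core erefl ltA Hy.
exists b; split => //.
rewrite /wnorm; apply: (bigmax_lt (F := fun i => s i * abs ((\sum_(j in A) b j *: x j) ord0 i))) => // i; rewrite row_sumE.
case: (boolP (i \in VS s r)) => iP.
  have [c0 ec] := Hc i iP.
  have -> : \sum_(j in A) b j * x j ord0 i = c i * \sum_(j in A) b j * y j i.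
    rewrite mulr_sumr; apply: eq_bigr => j _; rewrite /y.
    by rewrite mulrCA [c i * _]mulrC divfK.
  rewrite absM ec mulrA mulrCA divff ?mulr1; last exact: lt0r_neq0.
  by rewrite -[X in _ < X]mulr1 ltr_pM2l // blt.
rewrite mulrC -ltr_pdivlMr //; apply: sum_lt; first exact: divr_gt0.
move=> j jA; rewrite absM.
have hx : abs (x j ord0 i) < r / s i.
  have hle : s i * abs (x j ord0 i) <= r := le_trans (term_le _ _ _) (Hx j jA).
  rewrite lt_neqAle ler_pdivlMr // [_ * s i]mulrC hle andbT.
  apply/eqP => e; move: iP; rewrite inE => /asboolP; apply.
  exists (x j ord0 i); split => //; apply/eqP => e0.
  by move: e; rewrite e0 abs0 => /esym /eqP; rewrite mulf_eq0 invr_eq0 !gt_eqF.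
apply: le_lt_trans hx; rewrite -[X in _ <= X]mul1r ler_wpM2r ?abs_ge0 //.
exact: ble.
Qed.


Lemma count_le (n : nat) (t s : 'I_n -> R) (Ht : forall i, 0 < t i)
  (Hs : forall i, 0 < s i) (f : 'rV[K]_n -> 'rV[K]_n)
  (lin : forall (a : K) (x y : 'rV[K]_n), f (a *: x + y) = a *: f x + f y)
  (iso : forall x, wnorm abs s (f x) = wnorm abs t x) (r : R) (hr : 0 < r) :
  (#|VS t r| <= #|VS s r|)%N.
Proof.
rewrite leqNgt; apply/negP => lt.
have [a Ha] : exists a : 'I_n -> K, forall i, i \in VS t r -> a i != 0 /\ abs (a i) = r / t i.
  apply: (@fin_all_exists _ (fun _ => K) (fun i ci => i \in VS t r -> ci != 0 /\ abs ci = r / t i)) => i.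
  case: (pselect (i \in VS t r)) => [|h]; last by exists 0.
  by rewrite inE => /asboolP [z [z0 ez]]; exists z.
set A := VS t r.
set x := fun i : 'I_n => a i *: (delta_mx ord0 i : 'rV[K]_n).
have xE : forall i k, x i ord0 k = if k == i then a i else 0.
  by move=> i k; rewrite /x !mxE eqxx /=; case: eqP => _; rewrite ?mulr1 ?mulr0.
have Hx : forall j, j \in A -> wnorm abs s (f (x j)) <= r.
  move=> j jA; rewrite iso /wnorm; apply: bigmax_le => [|k]; first exact: ltW.
  rewrite xE; case: eqP => [->|_]; last by rewrite abs0 mulr0 ltW.
  by rewrite (Ha j jA).2 mulrC divfK ?gt_eqF.
have [b [ble [j1 j1A bj1] blt]] := upper Hs hr Hx lt.
have f0 : f 0 = 0.
  have := lin 1 0 0; rewrite !scale1r addr0 => e.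
  by apply: (addrI (f 0)); rewrite addr0 -e.
have fD : {morph f : u v / u + v}.
  by move=> u v; have := lin 1 u v; rewrite !scale1r.
have fZ : forall (c : K) u, f (c *: u) = c *: f u.
  by move=> c u; rewrite -[c *: u]addr0 lin f0 addr0.
have fsum : f (\sum_(j in A) b j *: x j) = \sum_(j in A) b j *: f (x j).
  by rewrite (big_morph f fD f0); apply: eq_bigr => j _; exact: fZ.
move: blt; rewrite -fsum iso; apply/negP; rewrite -leNgt.
apply: le_trans (term_le t _ j1).
rewrite row_sumE (bigD1 j1) //= big1 ?addr0; last first.
  by move=> j /andP[_ jj1]; rewrite xE eq_sym (negPf jj1) mulr0.
rewrite xE eqxx absM bj1 mul1r (Ha j1 j1A).2 mulrC divfK //.
by rewrite gt_eqF.
Qed.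


Lemma V_mul u v : value_group abs u -> value_group abs v -> value_group abs (u * v).
Proof.
move=> [x [x0 ex]] [y [y0 ey]]; exists (x * y); split; first by rewrite mulf_neq0.
by rewrite absM ex ey.
Qed.
Lemma V_inv u : value_group abs u -> value_group abs u^-1.
Proof.
move=> [x [x0 ex]]; exists x^-1; split; first by rewrite invr_neq0.
by rewrite absV // ex.
Qed.
Lemma V1 : value_group abs 1.
Proof. by exists 1; split; rewrite ?oner_neq0 ?abs1. Qed.

Definition rep (a : R) : R :=
  epsilon (inhabits 0) (fun b => 0 < b /\ value_group abs (a / b)).

Lemma rep_spec a : 0 < a -> 0 < rep a /\ value_group abs (a / rep a).
Proof.
move=> a0; apply: (@epsilon_spec R (inhabits 0) (fun b => 0 < b /\ value_group abs (a / b))); exists a; split => //.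
by rewrite divff ?gt_eqF //; exact: V1.
Qed.

Lemma V_tr (a b c : R) : 0 < b ->
  value_group abs (a / b) -> value_group abs (b / c) -> value_group abs (a / c).
Proof.
move=> b0 h1 h2.
have -> : a / c = (a / b) * (b / c) by rewrite mulrA divfK ?gt_eqF.
exact: V_mul.
Qed.
Lemma V_sym (a b : R) : value_group abs (a / b) -> value_group abs (b / a).
Proof. by move=> h; rewrite -invf_div; apply: V_inv. Qed.

Lemma rep_eq a a' : 0 < a -> 0 < a' -> value_group abs (a / a') -> rep a = rep a'.
Proof.
move=> a0 a'0 h; rewrite /rep; f_equal.
apply: functional_extensionality => b; apply: propositional_extensionality.
split => -[b0 hb]; split => //.
  by apply: (V_tr a0) hb; apply: V_sym.
exact: (V_tr a'0) hb.
Qed.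

Lemma setrep n (u : 'I_n -> R) (Hu : forall i, 0 < u i) y (hy : 0 < y) :
  [set k | rep (u k) == rep y] = VS u y.
Proof.
apply/setP => k; rewrite !inE; apply/eqP/asboolP => [e | h].
  have [q0 hq] := rep_spec (Hu k); have [q1 hq1] := rep_spec hy.
  by rewrite e in hq; apply: (V_tr q1) hq1 _; apply: V_sym.
by apply: rep_eq => //; apply: V_sym.
Qed.

End Basic.

Unset Implicit Arguments.
Set Strict Implicit.

Theorem mainTheorem12 (R : realType) (K : fieldType) (abs : K -> R)
  (Habs : nonarch_abs abs) (Hntriv : nontrivial_abs abs)
  (Hcompl : abs_complete abs) (Hnsph : ~ spherically_complete abs)
  (n : nat) (t s : 'I_n -> R)
  (Ht : forall i, 0 < t i) (Hs : forall i, 0 < s i) :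
  isometrically_isomorphic abs t s <->
  exists sigma : 'S_n, forall i : 'I_n, value_group abs (t i / s (sigma i)).
Proof.
split.
- move=> [f [lin [g fg gf] iso]].
  have ling : forall (a : K) x y, g (a *: x + y) = a *: g x + g y.
    by move=> a x y; apply: (can_inj fg); rewrite lin !gf.
  have isog : forall y, wnorm abs t (g y) = wnorm abs s y by move=> y; rewrite -iso gf.
  have ceq : forall r, 0 < r -> #|VS abs t r| = #|VS abs s r|.
    move=> r hr; apply/eqP; rewrite eqn_leq.
    by rewrite (count_le Habs Ht Hs lin iso hr) (count_le Habs Hs Ht ling isog hr).
  set tt := [tuple rep abs (t i) | i < n].
  set ts := [tuple rep abs (s i) | i < n].
  have : perm_eq tt ts.
    rewrite /perm_eq; apply/allP => x; rewrite mem_cat => /orP [] /tnthP [i ->];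
      rewrite !tnth_mktuple /= !cnt.
      by apply/eqP; rewrite !(setrep Habs) // ceq.
    by apply/eqP; rewrite !(setrep Habs) // ceq.
  case/tuple_permP => p e; exists p => i.
  have e' : tt = [tuple tnth ts (p i) | i < n] := val_inj e.
  have : tnth tt i = tnth ts (p i) by rewrite e' tnth_mktuple.
  rewrite !tnth_mktuple => er.
  have [q0 hq] := rep_spec Habs (Ht i); have [q1 hq1] := rep_spec Habs (Hs (p i)).
  rewrite er in hq; exact: (V_tr Habs q1 hq (V_sym Habs hq1)).
- case=> sigma Hsig.
  have [a Ha] : exists a : 'I_n -> K, forall i, a i != 0 /\ abs (a i) = t i / s (sigma i).
    apply: (@fin_all_exists _ (fun _ => K) (fun i ci => ci != 0 /\ abs ci = t i / s (sigma i))) => i.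
    by have [x [x0 ex]] := Hsig i; exists x.
  have Ha0 : forall i, a i != 0 by move=> i; case: (Ha i).
  pose f := fun x : 'rV[K]_n => \row_j (a ((sigma^-1)%g j) * x ord0 ((sigma^-1)%g j)).
  exists f; split.
  + move=> c x y; apply/rowP => j; rewrite !mxE; ring.
  + exists (fun y : 'rV[K]_n => \row_i (y ord0 (sigma i) / a i)) => x; apply/rowP => k;
      rewrite !mxE ?permK ?permKV.
      by rewrite mulrC mulKf ?Ha0.
    by rewrite mulrC divfK ?Ha0.
  + move=> x; apply/le_anti/andP; split.
    * rewrite /wnorm; apply: bigmax_le; first exact: bigmax_ge0.
      move=> j; rewrite mxE (absM Habs) mulrA -{1}(permKV sigma j) (Ha _).2 (mulrC (s _)) divfK ?gt_eqF //.
      exact: (term_le abs t x).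
    * rewrite /wnorm; apply: bigmax_le; first exact: bigmax_ge0.
      move=> i; apply: le_trans (term_le abs s (f x) (sigma i)).
      by rewrite mxE permK (absM Habs) mulrA (Ha i).2 (mulrC (s _)) divfK ?gt_eqF.
Qed.
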